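(* Let $x\in W_n$ and $1\le i\le n-2$. Then $x\in\mathcal{D}_i(W_n)$ if and only if $tx\in\mathcal{D}_i(W_n)$; and if this is the case, then $\gamma_i(tx)=t\gamma_i(x)$.
   Context: $W_n$ is the Weyl group of type $B_n$ with Coxeter generators $t,s_1,\dots,s_{n-1}$ ($(ts_1)^4=1$, $(s_is_{i+1})^3=1$, other distinct pairs commute), $\ell$ its length function. For $1\le i\le n-2$ and $x\in W_n$, let $\mathcal{R}_i(x)=\{s\in\{s_i,s_{i+1}\}:\ell(xs)<\ell(x)\}$ and let $\mathcal{D}_i(W_n)$ be the set of $x\in W_n$ with $|\mathcal{R}_i(x)|=1$. For $x\in\mathcal{D}_i(W_n)$ the set $\{xs_i,xs_{i+1}\}\cap\mathcal{D}_i(W_n)$ is a singleton, whose element is denoted $\gamma_i(x)$ (the Kazhdan–Lusztig star operation). *)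

(* Defs.v *)
(* Weyl group W_n of type B_n realized as signed permutations:
   permutations of 'I_n * bool (coordinate j (0-indexed), sign) generated by
   t (sign change of coordinate 0, i.e. coordinate 1 in the paper) and
   s_k (1 <= k <= n-1) swapping coordinates k-1 and k (paper: k and k+1). *)
From mathcomp Require Import all_boot all_fingroup.
Unset Strict Implicit. Unset Printing Implicit Defensive.
Local Open Scope group_scope.

Section WeylB.
Variable n : nat.
Definition elt := {perm 'I_n * bool}.

Definition gen (k : 'I_n) : elt :=
  let pk : 'I_n := Ordinal (leq_ltn_trans (leq_pred k) (ltn_ord k)) in
  if (k : nat) == 0 then tperm (k, false) (k, true)
  else tperm (pk, false) (k, false) * tperm (pk, true) (k, true).

(* generator by natural-number index (identity if out of range) *)
Definition sgen (j : nat) : elt := oapp gen 1 (insub j : option 'I_n).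
Definition t : elt := sgen 0.

Definition W : {set elt} := <<[set gen k | k : 'I_n]>>.

Definition word_of_len (x : elt) (m : nat) : bool :=
  [exists w : m.-tuple 'I_n, \prod_(k <- w) gen k == x].

(* Coxeter length: least m such that x is a product of m generators.
   (A reduced word has pairwise distinct prefix products, so its length is
   < #|elt|; hence searching m in [0, #|elt|) finds the minimum for x in W.) *)
Definition ell (x : elt) : nat := find (word_of_len x) (iota 0 #|elt|).

Definition Rset (i : nat) (x : elt) : {set elt} :=
  [set s in [set sgen i; sgen i.+1] | ell (x * s) < ell x].

Definition D (i : nat) : {set elt} := [set x in W | #|Rset i x| == 1%N].

Definition gamma (i : nat) (x : elt) : elt :=
  odflt x [pick y in [set x * sgen i; x * sgen i.+1] :&: D i].
End WeylB.

(* Main.v *)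
Require Import Defs.
From mathcomp Require Import all_boot all_fingroup zify.
Local Open Scope group_scope.

Definition key {n} (a : 'I_n * bool) : nat :=
  if a.2 then (n - a.1.+1)%N else (n + a.1)%N.
Definition flip {n} (a : 'I_n * bool) : 'I_n * bool := (a.1, ~~ a.2).

Lemma key_lt {n} (a : 'I_n * bool) : (key a < 2 * n)%N.
Proof. case: a => [[j hj] []] /=; rewrite /key /=; lia. Qed.

Lemma key_inj {n} : injective (@key n).
Proof.
move=> [[j hj] b] [[j' hj'] b']; rewrite /key /=.
case: b; case: b' => /= H; try lia;
  (have E : j = j' by lia); subst; by congr pair; apply: val_inj.
Qed.

Lemma key_eq {n} (a b : 'I_n * bool) : (key a == key b) = (a == b).
Proof. by apply/eqP/eqP => [/key_inj|->]. Qed.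

Lemma key_flip {n} (a : 'I_n * bool) : key (flip a) = (2 * n - 1 - key a)%N.
Proof. case: a => [[j hj] []]; rewrite /key /=; lia. Qed.

Lemma flipK {n} : involutive (@flip n).
Proof. by case=> a b; rewrite /flip /= negbK. Qed.

Lemma tperm_key {n} (c d u v : 'I_n * bool) :
  key d = (key c).+1 -> u != v -> ~~ ((u == c) && (v == d)) ->
  ~~ ((u == d) && (v == c)) ->
  (key (tperm c d u) < key (tperm c d v))%N = (key u < key v)%N.
Proof.
move=> Hcd Huv H1 H2; rewrite !permE /=.
have K : forall a, key (if a == c then d else if a == d then c else a) =
  (if key a == key c then key d else if key a == key d then key c else key a).
  by move=> a; rewrite !key_eq; case: (a == c); case: (a == d).
rewrite !K //; move: Huv H1 H2; rewrite -!key_eq.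
case: (key u =P key c); case: (key u =P key d);
case: (key v =P key c); case: (key v =P key d) => //=; lia.
Qed.

Definition inv_ok {n} (x : elt n) (ab : ('I_n * bool) * ('I_n * bool)) : bool :=
  [&& (key ab.1 < key ab.2)%N, (2 * n <= key ab.1 + key ab.2 + 1)%N &
      (key (x ab.2) < key (x ab.1))%N].
Definition F {n} (x : elt n) := #|[set ab | inv_ok x ab]|.

Lemma card_change (T : finType) (A B : {set T}) p :
  (forall z, z != p -> (z \in B) = (z \in A)) ->
  [/\ p \in A -> p \notin B -> (#|B| + 1 = #|A|)%N,
      p \notin A -> p \in B -> #|B| = (#|A| + 1)%N &
      (p \in A) = (p \in B) -> #|B| = #|A|].
Proof.
move=> H.
have E : B :\ p = A :\ p.
  by apply/setP => z; rewrite !inE; case: (z =P p) => // /eqP /H.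
have cA := cardsD1 p A; have cB := cardsD1 p B; rewrite E in cB.
split=> [pA pB|pA pB|eAB]; rewrite cA cB.
- by rewrite pA (negbTE pB); lia.
- by rewrite pB (negbTE pA); lia.
- by rewrite eAB.
Qed.

Lemma permx_eq {n} (x : elt n) a c : (x a == c) = (a == x^-1 c).
Proof. by rewrite (canF_eq (permK x)). Qed.

Lemma tau_F {n} (x : elt n) c d : key d = (key c).+1 ->
  let P := x^-1 c in let Q := x^-1 d in
  let R0 := (2 * n <= key P + key Q + 1)%N in
  let ds := (key Q < key P)%N in
  [/\ R0 -> ds -> (F (x * tperm c d)%g + 1 = F x)%N,
      R0 -> ~~ ds -> F (x * tperm c d)%g = (F x + 1)%N &
      ~~ R0 -> F (x * tperm c d) = F x].
Proof.
move=> Hcd P Q R0 ds.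
have PQ : P != Q.
  by rewrite /P /Q (inj_eq (@perm_inj _ _)); apply/eqP => E; move: Hcd; rewrite E; lia.
have kPQ : key P != key Q by rewrite key_eq.
set p0 := if (key P < key Q)%N then (P, Q) else (Q, P).
have C1 : forall ab, ab != p0 -> inv_ok (x * tperm c d) ab = inv_ok x ab.
  case=> a b Hab; rewrite /inv_ok /= !permM.
  case: (ltnP (key a) (key b)) => //= Hk; congr (_ && _).
  apply: tperm_key => //.
  - rewrite (inj_eq (@perm_inj _ _)); apply/eqP => E; move: Hk; rewrite E; lia.
  - rewrite !permx_eq; apply/andP => -[/eqP Eb /eqP Ea]; move: Hab Hk.
    rewrite Ea Eb -/P -/Q /p0; case: ltnP; rewrite ?eqxx //; lia.
  - rewrite !permx_eq; apply/andP => -[/eqP Eb /eqP Ea]; move: Hab Hk.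
    rewrite Ea Eb -/P -/Q /p0; case: ltnP; rewrite ?eqxx //; lia.
have xP : x P = c by rewrite /P permKV.
have xQ : x Q = d by rewrite /Q permKV.
have C2 : inv_ok x p0 = R0 && ds.
  rewrite /inv_ok /p0 /R0 /ds; case: (ltnP (key P) (key Q)) => H /=; rewrite ?xP ?xQ ?Hcd.
    have -> : ((key c).+1 < key c)%N = false by lia.
    have -> : (key Q < key P)%N = false by lia.
    by rewrite !andbF.
  have H' : (key Q < key P)%N by move: kPQ H; lia.
  by rewrite H' ltnSn (addnC (key Q)) !andbT.
have C3 : inv_ok (x * tperm c d) p0 = R0 && ~~ ds.
  rewrite /inv_ok /p0 /R0 /ds !permM; case: (ltnP (key P) (key Q)) => H /=;
    rewrite ?xP ?xQ ?tpermL ?tpermR ?Hcd.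
    have -> : (key Q < key P)%N = false by lia.
    by rewrite H ltnSn !andbT.
  have H' : (key Q < key P)%N by move: kPQ H; lia.
  have -> : ((key c).+1 < key c)%N = false by lia.
  by rewrite H' !andbF.
have := @card_change _ [set ab | inv_ok x ab] [set ab | inv_ok (x * tperm c d) ab] p0.
case.
  by move=> z Hz; rewrite !inE C1.
rewrite !inE C2 C3 => h1 h2 h3; rewrite /F.
split=> [r e|r e|r].
- by apply: h1; rewrite ?r ?e.
- by apply: h2; rewrite ?r ?e.
- by apply: h3; rewrite (negbTE r).
Qed.

Lemma tperm_comm (T : finType) (a b c d z : T) :
  a != c -> a != d -> b != c -> b != d ->
  tperm a b (tperm c d z) = tperm c d (tperm a b z).
Proof.
move=> ac ad bc bd.
case: (tpermP c d z) => [->|->|/eqP zc /eqP zd].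
- by rewrite (tpermD ad bd) (tpermD ac bc) tpermL.
- by rewrite (tpermD ac bc) (tpermD ad bd) tpermR.
- case: (tpermP a b z) => [_|_|_ _].
  + by rewrite tpermD // eq_sym.
  + by rewrite tpermD // eq_sym.
  + by rewrite tpermD // eq_sym.
Qed.

Definition pk {n} (k : 'I_n) : 'I_n := Ordinal (leq_ltn_trans (leq_pred k) (ltn_ord k)).

Lemma genE {n} (k : 'I_n) : gen n k =
  if (k : nat) == 0 then tperm (k, false) (k, true)
  else tperm (pk k, false) (k, false) * tperm (pk k, true) (k, true).
Proof. by []. Qed.

Lemma pk_neq {n} (k : 'I_n) : (k : nat) != 0 -> pk k != k.
Proof. by move=> H; apply/eqP => /(congr1 val) /=; move: H; lia. Qed.

Lemma gen_disj {n} (k : 'I_n) (b b' : bool) : (k : nat) != 0 ->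
  [/\ (pk k, b) != (pk k, b'), (pk k, b) != (k, b'),
      (k, b) != (pk k, b') & (k, b) != (k, b')] \/ b = b'.
Proof.
move=> H; case: (boolP (b == b')) => [/eqP|nb]; [by right|left].
by rewrite !xpair_eqE (negbTE nb) (negbTE (pk_neq _ H)) eq_sym (negbTE (pk_neq _ H)) !andbF.
Qed.

Lemma genK {n} (k : 'I_n) a : gen n k (gen n k a) = a.
Proof.
rewrite genE; case: ifP => H; first by rewrite tpermK.
move/negbT: H => H; rewrite !permM.
have [[d1 d2 d3 d4]|//] := gen_disj k false true H.
by rewrite -tperm_comm // tpermK tpermK.
Qed.

Lemma gen_flip {n} (k : 'I_n) a : gen n k (flip a) = flip (gen n k a).
Proof.
have fi : injective (@flip n) := can_inj flipK.
rewrite genE; case: ifP => H.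
  by rewrite (inj_tperm _ _ _ fi) /flip /= tpermC.
move/negbT: H => H; rewrite !permM (inj_tperm _ _ _ fi) (inj_tperm _ _ _ fi) /flip /=.
rewrite -/(flip a).
have [[d1 d2 d3 d4]|//] := gen_disj k false true H.
by rewrite tperm_comm.
Qed.

Definition sym {n} (x : elt n) := forall a, x (flip a) = flip (x a).

Definition flipP {n} : elt n := perm (can_inj (@flipK n)).

Lemma W_sym {n} (x : elt n) : x \in W n -> sym x.
Proof.
have : W n \subset 'C[@flipP n].
  rewrite /W gen_subG; apply/subsetP => g /imsetP [k _ ->].
  by apply/cent1P/permP => a; rewrite !permM !permE gen_flip.
move/subsetP => S /S /cent1P E a.
by move/permP: E => /(_ a); rewrite !permM !permE.
Qed.

Lemma gen_W {n} (k : 'I_n) : gen n k \in W n.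
Proof. by apply: mem_gen; apply/imsetP; exists k. Qed.

Lemma genV {n} (k : 'I_n) : (gen n k)^-1 = gen n k.
Proof.
apply/permP => a; apply: (@perm_inj _ (gen n k)).
by rewrite permKV genK.
Qed.

Lemma symV {n} (x : elt n) : sym x -> sym x^-1.
Proof.
move=> S a; apply: (@perm_inj _ x); rewrite permKV S permKV //.
Qed.

Definition cc {n} (k : 'I_n) : 'I_n * bool :=
  if (k : nat) == 0 then (k, true) else (pk k, false).
Definition dsc {n} (x : elt n) (k : 'I_n) : bool :=
  (key (x^-1 (k, false)) < key (x^-1 (cc k)))%N.

Lemma gen_F {n} (x : elt n) (k : 'I_n) : sym x ->
  (dsc x k -> (F (x * gen n k)%g + 1 = F x)%N) /\
  (~~ dsc x k -> F (x * gen n k)%g = (F x + 1)%N).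
Proof.
move=> Sx; have SV := symV _ Sx.
have kn := ltn_ord k.
rewrite /dsc /cc genE; case: ifP => /eqP H.
  have Hcd : key (k, false) = (key (k, true)).+1 by rewrite /key /=; lia.
  rewrite tpermC; have [h1 h2 h3] := tau_F x _ _ Hcd.
  have E : x^-1 (k, false) = flip (x^-1 (k, true)) by rewrite -SV.
  have R0 : (2 * n <= key (x^-1 (k, true)) + key (x^-1 (k, false)) + 1)%N.
    rewrite E key_flip; have := key_lt (x^-1 (k, true)); lia.
  by split=> D; [apply: h1|apply: h2].
have Hk : (k : nat) != 0 by apply/eqP.
set c1 := (pk k, false); set d1 := (k, false).
set c2 := (k, true); set d2 := (pk k, true).
have Hcd1 : key d1 = (key c1).+1 by rewrite /key /=; lia.
have Hcd2 : key d2 = (key c2).+1 by rewrite /key /=; lia.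
rewrite (tpermC (pk k, true)) -/c2 -/d2 mulgA.
have [a1 a2 a3] := tau_F x _ _ Hcd1.
have [b1 b2 b3] := tau_F (x * tperm c1 d1) _ _ Hcd2.
have e2 : (x * tperm c1 d1)^-1 c2 = flip (x^-1 d1).
  rewrite invMg permM tpermV tpermD; first by rewrite -SV.
    by rewrite /c1 /c2 xpair_eqE andbF.
  by rewrite /d1 /c2 xpair_eqE andbF.
have f2 : (x * tperm c1 d1)^-1 d2 = flip (x^-1 c1).
  rewrite invMg permM tpermV tpermD; first by rewrite -SV.
    by rewrite /c1 /d2 xpair_eqE andbF.
  by rewrite /d1 /d2 xpair_eqE eq_sym (negbTE (pk_neq _ Hk)).
rewrite e2 f2 !key_flip in b1 b2 b3.
have l1 := key_lt (x^-1 c1); have l2 := key_lt (x^-1 d1).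
have ne : (key (x^-1 c1) + key (x^-1 d1) != 2 * n - 1)%N.
  apply/eqP => Es.
  have : key (x^-1 d1) = key (flip (x^-1 c1)) by rewrite key_flip; lia.
  move/key_inj; rewrite -SV => /perm_inj /eqP; rewrite xpair_eqE andbF //.
case: (leqP (2 * n) (key (x^-1 c1) + key (x^-1 d1) + 1)) => R.
- have R2 : ~~ (2 * n <= 2 * n - 1 - key (x^-1 d1) + (2 * n - 1 - key (x^-1 c1)) + 1)%N.
    by rewrite -ltnNge; lia.
  have := b3 R2 => ->.
  by split=> D; [apply: a1|apply: a2].
- have R1 : ~~ (2 * n <= key (x^-1 c1) + key (x^-1 d1) + 1)%N by rewrite -ltnNge.
  have R2 : (2 * n <= 2 * n - 1 - key (x^-1 d1) + (2 * n - 1 - key (x^-1 c1)) + 1)%N by lia.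
  have E1 := a3 R1.
  split=> D.
  + rewrite b1 ?E1 //; lia.
  + rewrite b2 ?E1 //; apply: contra D; lia.
Qed.

Lemma pk_val {n} (k : 'I_n) : (pk k : nat) = k.-1.
Proof. by []. Qed.

Lemma nodsc {n} (x : elt n) : sym x -> (forall k, ~~ dsc x k) -> x = 1.
Proof.
move=> Sx ND; have SV := symV _ Sx; set y := x^-1 in SV ND.
have step : forall k : 'I_n, (k : nat) != 0 ->
    (key (y (pk k, false)) < key (y (k, false)))%N.
  move=> k Hk; have := ND k; rewrite /dsc /cc (negbTE Hk) -/y -leqNgt leq_eqVlt.
  rewrite key_eq (inj_eq (@perm_inj _ _)) xpair_eqE (negbTE (pk_neq _ Hk)) /=.
  by [].
have low : forall m (j : 'I_n), (j : nat) = m -> (n + j <= key (y (j, false)))%N.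
  elim=> [|m IH] j Hj.
    have := ND j; rewrite /dsc /cc Hj eqxx -/y.
    have -> : y (j, true) = flip (y (j, false)) by rewrite -SV.
    rewrite key_flip; have := key_lt (y (j, false)); lia.
  have Hk : (j : nat) != 0 by rewrite Hj.
  have := step j Hk; have := IH (pk j); rewrite pk_val Hj /= => /(_ erefl).
  lia.
have up : forall d (j : 'I_n), (j + d = n - 1)%N -> (key (y (j, false)) <= n + j)%N.
  elim=> [|d IH] j Hj.
    have := key_lt (y (j, false)); lia.
  have hj' : (j.+1 < n)%N by lia.
  have := IH (Ordinal hj') => /= /(_ ltac:(lia)).
  have Hk : (Ordinal hj' : nat) != 0 by [].
  have := step _ Hk.
  have -> : pk (Ordinal hj') = j by apply: val_inj.
  lia.
have yj : forall j : 'I_n, y (j, false) = (j, false).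
  move=> j; apply: key_inj.
  have := low _ j erefl; have := up (n - 1 - j) j ltac:(have := ltn_ord j; lia).
  rewrite /key /=; lia.
have y1 : y = 1.
  apply/permP => -[j b]; rewrite perm1; case: b; last exact: yj.
  by have := SV (j, false); rewrite yj.
by rewrite -[x]invgK -/y y1 invg1.
Qed.

Lemma F1 {n} : F (1 : elt n) = 0%N.
Proof.
apply/eqP; rewrite cards_eq0; apply/eqP/setP => -[a b]; rewrite !inE /inv_ok /= !perm1.
by apply/negP => /and3P [h1 _ h2]; move: h1 h2; lia.
Qed.

Lemma prod_W {n} (s : seq 'I_n) : (\prod_(k <- s) gen n k)%g \in W n.
Proof. by apply: group_prod => k _; exact: gen_W. Qed.

Lemma prod_rcons {n} (s : seq 'I_n) k :
  (\prod_(j <- rcons s k) gen n j)%g = ((\prod_(j <- s) gen n j) * gen n k)%g.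
Proof. by rewrite big_rcons. Qed.

Lemma gen_F_le {n} (y : elt n) k : sym y -> (F (y * gen n k)%g <= F y + 1)%N.
Proof.
move=> Sy; have [h1 h2] := gen_F y k Sy.
case: (boolP (dsc y k)) => D; [have := h1 D|have := h2 D]; lia.
Qed.

Lemma F_word {n} (s : seq 'I_n) : (F (\prod_(k <- s) gen n k)%g <= size s)%N.
Proof.
elim/last_ind: s => [|s k IH]; first by rewrite big_nil F1.
rewrite prod_rcons size_rcons.
apply: leq_trans (gen_F_le _ _ (W_sym _ (prod_W s))) _.
by rewrite addn1 ltnS.
Qed.

Lemma word_F {n} m (x : elt n) : x \in W n -> F x = m ->
  exists s : seq 'I_n, size s = m /\ (\prod_(k <- s) gen n k)%g = x.
Proof.
elim: m x => [|m IH] x Wx Fx.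
  exists [::]; split => //; rewrite big_nil; apply/esym/nodsc; first exact: W_sym.
  move=> k; apply/negP => D; have [h1 _] := gen_F x k (W_sym _ Wx).
  by have := h1 D; lia.
case: (boolP [exists k, dsc x k]) => [/existsP [k D]|].
  have [h1 _] := gen_F x k (W_sym _ Wx).
  have Wy : (x * gen n k)%g \in W n by rewrite groupM // gen_W.
  have [s [Hs Hp]] := IH _ Wy ltac:(have := h1 D; lia).
  exists (rcons s k); split; first by rewrite size_rcons Hs.
  rewrite prod_rcons Hp -mulgA.
  have -> : (gen n k * gen n k)%g = 1 by rewrite -{1}genV mulVg.
  by rewrite mulg1.
rewrite negb_exists => /forallP ND.
by move: Fx; rewrite (nodsc x (W_sym _ Wx) ND) F1.
Qed.

Lemma fact_bound m : (6 <= m)%N -> (m * m < m`!)%N.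
Proof.
elim: m => [//|m IH] H.
case: (ltngtP m 6) => Hm.
- have -> : m = 5 by lia. by [].
- have := IH (ltnW Hm); rewrite factS.
  have : (m.+1 <= m * m)%N by nia.
  nia.
- by subst.
Qed.

Lemma F_lt {n} (x : elt n) : (3 <= n)%N -> (F x < #|elt n|)%N.
Proof.
move=> Hn.
have h1 : (F x <= #|{: ('I_n * bool) * ('I_n * bool)}|)%N by apply: max_card.
have h2 : (#|perm_on [set: 'I_n * bool]| <= #|elt n|)%N by apply: max_card.
rewrite card_perm cardsT !card_prod card_ord card_bool in h1 h2.
have := fact_bound (n * 2) ltac:(lia); lia.
Qed.

Lemma find_iota_eq (P : pred nat) N m : (m < N)%N -> P m ->
  (forall j, (j < m)%N -> ~~ P j) -> find P (iota 0 N) = m.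
Proof.
move=> mN Pm Hj.
have -> : N = (m + (N - m).-1.+1)%N by lia.
rewrite iotaD find_cat size_iota /=.
have -> : has P (iota 0 m) = false.
  apply/negP => /hasP [j]; rewrite mem_iota add0n => /andP [_ jm] Pj.
  by move: (Hj j jm); rewrite Pj.
by rewrite add0n Pm addn0.
Qed.

Lemma word_lenP {n} (x : elt n) m :
  reflect (exists s : seq 'I_n, size s = m /\ (\prod_(k <- s) gen n k)%g = x)
          (word_of_len n x m).
Proof.
apply: (iffP existsP) => [[w /eqP Hw]|[s [Hs Hp]]].
  by exists w; rewrite size_tuple.
have Hs' : size s == m by rewrite Hs.
by exists (Tuple Hs'); rewrite /= Hp.
Qed.

Lemma ell_F {n} (x : elt n) : (3 <= n)%N -> x \in W n -> ell n x = F x.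
Proof.
move=> Hn Wx; apply: find_iota_eq; first exact: F_lt.
  by apply/word_lenP; apply: word_F.
move=> j Hj; apply/word_lenP => -[s [Hs Hp]].
by have := F_word s; rewrite Hp Hs; lia.
Qed.

Lemma ell_desc {n} (x : elt n) k : (3 <= n)%N -> x \in W n ->
  (ell n (x * gen n k)%g < ell n x)%N = dsc x k.
Proof.
move=> Hn Wx.
have Wy : (x * gen n k)%g \in W n by rewrite groupM // gen_W.
rewrite !ell_F //; have [h1 h2] := gen_F x k (W_sym _ Wx).
case: (boolP (dsc x k)) => D; [have := h1 D|have := h2 D]; lia.
Qed.

Lemma sgen_ord {n} {j} (hj : (j < n)%N) : sgen n j = gen n (Ordinal hj).
Proof. by rewrite /sgen insubT. Qed.

Lemma genE1 {n} (k : 'I_n) : (k : nat) != 0 -> gen n k (k, false) = (pk k, false).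
Proof.
move=> Hk; rewrite genE (negbTE Hk) permM tpermR tpermD //.
  by rewrite xpair_eqE andbF.
by rewrite xpair_eqE andbF.
Qed.

Lemma genE2 {n} (k : 'I_n) : (k : nat) != 0 -> gen n k (pk k, false) = (k, false).
Proof.
move=> Hk; rewrite genE (negbTE Hk) permM tpermL tpermD //.
  by rewrite xpair_eqE andbF.
by rewrite xpair_eqE andbF.
Qed.

Lemma genE3 {n} (k j : 'I_n) : (k : nat) != 0 -> j != k -> j != pk k ->
  gen n k (j, false) = (j, false).
Proof.
move=> Hk h1 h2; rewrite genE (negbTE Hk) permM.
have e1 : tperm (pk k, false) (k, false) (j, false) = (j, false).
  by apply: tpermD; rewrite xpair_eqE andbT eq_sym.
rewrite e1; apply: tpermD; by rewrite xpair_eqE andbF.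
Qed.

Lemma invmul_gen {n} (x : elt n) k v : (x * gen n k)^-1 v = x^-1 (gen n k v).
Proof. by rewrite invMg permM genV. Qed.

Lemma dsc_t {n} (x : elt n) (k : 'I_n) (h0 : (0 < n)%N) : x \in W n -> (k : nat) != 0 ->
  dsc (t n * x) k = dsc x k.
Proof.
move=> Wx Hk; have SV := symV _ (W_sym _ Wx).
rewrite /dsc /cc (negbTE Hk) /t (sgen_ord h0) invMg !permM genV genE /=.
set o := Ordinal h0.
rewrite (tpermC (o, false)).
set u := x^-1 (k, false); set v := x^-1 (pk k, false).
have nf : v != flip u.
  by rewrite /u -SV (inj_eq (@perm_inj _ _)) xpair_eqE andbF.
apply: tperm_key.
- by rewrite /key /=; lia.
- by rewrite /u /v (inj_eq (@perm_inj _ _)) xpair_eqE eq_sym (negbTE (pk_neq _ Hk)).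
- apply/andP => -[/eqP a /eqP b]; move: nf; by rewrite a b eqxx.
- apply/andP => -[/eqP a /eqP b]; move: nf; by rewrite a b eqxx.
Qed.

Lemma A2 (a b c : nat) : a != b -> b != c -> a != c ->
  ((b < a)%N != (c < b)%N) ->
  ((a < b)%N != (c < a)%N) = ~~ ((c < a)%N != (b < c)%N).
Proof.
move=> /eqP h1 /eqP h2 /eqP h3.
case: (ltngtP a b); case: (ltngtP b c); case: (ltngtP a c); move=> //= *; lia.
Qed.

Lemma gen_neq {n} i (hi0 : (i < n)%N) (hi1 : (i.+1 < n)%N) : (0 < i)%N ->
  gen n (Ordinal hi0) != gen n (Ordinal hi1).
Proof.
move=> ipos; apply/eqP => /permP /(_ (Ordinal hi0, false)).
rewrite genE1 /=; last by rewrite -lt0n.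
have -> : Ordinal hi0 = pk (Ordinal hi1) by apply: val_inj.
rewrite genE2 // => /eqP; rewrite xpair_eqE andbT => /eqP /(congr1 val) /=.
lia.
Qed.

Lemma D_dsc {n} i (hi0 : (i < n)%N) (hi1 : (i.+1 < n)%N) (y : elt n) :
  (0 < i)%N -> (3 <= n)%N -> y \in W n ->
  (y \in D n i) = (dsc y (Ordinal hi0) != dsc y (Ordinal hi1)).
Proof.
move=> ipos n3 Wy; rewrite /D inE Wy /= /Rset (sgen_ord hi0) (sgen_ord hi1).
have ne := gen_neq i hi0 hi1 ipos.
set g1 := gen n (Ordinal hi0) in ne *; set g2 := gen n (Ordinal hi1) in ne *.
have P1 : (ell n (y * g1)%g < ell n y)%N = dsc y (Ordinal hi0) by apply: ell_desc.
have P2 : (ell n (y * g2)%g < ell n y)%N = dsc y (Ordinal hi1) by apply: ell_desc.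
case: (dsc y (Ordinal hi0)) P1 => P1; case: (dsc y (Ordinal hi1)) P2 => P2.
- have -> : [set s in [set g1; g2] | (ell n (y * s)%g < ell n y)%N] = [set g1; g2].
    apply/setP => s; rewrite !inE; case: (s =P g1) => [->|_]; first by rewrite P1.
    by case: (s =P g2) => [->|_]; first by rewrite P2.
  by rewrite cards2 ne.
- have -> : [set s in [set g1; g2] | (ell n (y * s)%g < ell n y)%N] = [set g1].
    apply/setP => s; rewrite !inE; case: (s =P g1) => [->|_]; first by rewrite P1.
    by case: (s =P g2) => [->|_]; first by rewrite P2.
  by rewrite cards1.
- have -> : [set s in [set g1; g2] | (ell n (y * s)%g < ell n y)%N] = [set g2].
    apply/setP => s; rewrite !inE; case: (s =P g1) => [->|_]; first by rewrite P1 (negbTE ne).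
    by case: (s =P g2) => [->|_]; first by rewrite P2.
  by rewrite cards1.
- have -> : [set s in [set g1; g2] | (ell n (y * s)%g < ell n y)%N] = set0.
    apply/setP => s; rewrite !inE; case: (s =P g1) => [->|_]; first by rewrite P1.
    by case: (s =P g2) => [->|_]; first by rewrite P2.
  by rewrite cards0.
Qed.

Lemma gamma1 {n} i (x : elt n) : (x * sgen n i \in D n i) -> (x * sgen n i.+1 \notin D n i) ->
  gamma n i x = x * sgen n i.
Proof.
move=> h1 h2; rewrite /gamma; case: pickP => [w|H] /=.
  rewrite in_setI in_set2 => /andP [/orP [/eqP ->|/eqP E] Dw] //.
  by move: h2; rewrite -E Dw.
by have := H (x * sgen n i); rewrite in_setI in_set2 eqxx h1.
Qed.

Lemma gamma2 {n} i (x : elt n) : (x * sgen n i \notin D n i) -> (x * sgen n i.+1 \in D n i) ->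
  gamma n i x = x * sgen n i.+1.
Proof.
move=> h1 h2; rewrite /gamma; case: pickP => [w|H] /=.
  rewrite in_setI in_set2 => /andP [/orP [/eqP E|/eqP ->] Dw] //.
  by move: h1; rewrite -E Dw.
by have := H (x * sgen n i.+1); rewrite in_setI in_set2 eqxx orbT h2.
Qed.

Lemma dscE {n} (z : elt n) (k : 'I_n) : (k : nat) != 0 ->
  dsc z k = (key (z^-1 (k, false)) < key (z^-1 (pk k, false)))%N.
Proof. by move=> Hk; rewrite /dsc /cc (negbTE Hk). Qed.

Theorem corollary2p13 (n i : nat) (x : elt n) :
  x \in W n -> (1 <= i <= n - 2)%N ->
  (x \in D n i <-> t n * x \in D n i) /\
  (x \in D n i -> gamma n i (t n * x) = t n * gamma n i x).
Proof.
move=> Wx /andP [hi1' hi2].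
have n3 : (3 <= n)%N by lia.
have h0 : (0 < n)%N by lia.
have hi0 : (i < n)%N by lia.
have hi1 : (i.+1 < n)%N by lia.
have ipos : (0 < i)%N by lia.
have Wt : t n \in W n by rewrite /t (sgen_ord h0) gen_W.
have Dt : forall y, y \in W n -> (t n * y \in D n i) = (y \in D n i).
  move=> y Wy; rewrite !(D_dsc _ hi0 hi1) ?groupM // !(dsc_t _ _ h0) //=; lia.
split; first by rewrite Dt.
move=> Dx.
set ki := Ordinal hi0; set ki1 := Ordinal hi1.
have ki0 : (ki : nat) != 0 by rewrite /= -lt0n.
have ki10 : (ki1 : nat) != 0 by [].
have pk1 : pk ki1 = ki by apply: val_inj.
set oi := pk ki.
have Ws1 : sgen n i \in W n by rewrite (sgen_ord hi0) gen_W.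
have Ws2 : sgen n i.+1 \in W n by rewrite (sgen_ord hi1) gen_W.
have Wy1 : x * sgen n i \in W n by rewrite groupM.
have Wy2 : x * sgen n i.+1 \in W n by rewrite groupM.
have n01 : oi != ki by apply: pk_neq.
have n12 : ki != ki1 by apply/eqP => /(congr1 val) /=; lia.
have n02 : oi != ki1 by apply/eqP => /(congr1 val) /=; lia.
have g10 : gen n ki (ki, false) = (oi, false) by apply: genE1.
have g01 : gen n ki (oi, false) = (ki, false) by apply: genE2.
have g22 : gen n ki (ki1, false) = (ki1, false) by apply: genE3; rewrite // 1?eq_sym.
have g21 : gen n ki1 (ki1, false) = (ki, false) by rewrite genE1 ?pk1.
have g12 : gen n ki1 (ki, false) = (ki1, false) by rewrite -{1}pk1 genE2.
have g00 : gen n ki1 (oi, false) = (oi, false) by apply: genE3; rewrite ?pk1.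
have ex : (x * sgen n i \in D n i) = ~~ (x * sgen n i.+1 \in D n i).
  move: Dx; rewrite !(D_dsc _ hi0 hi1) // (sgen_ord hi0) (sgen_ord hi1) -/ki -/ki1.
  rewrite !dscE // pk1 -/oi !invmul_gen g10 g01 g22 g21 g12 g00.
  by apply: A2; rewrite key_eq (inj_eq (@perm_inj _ _)) xpair_eqE andbT.
case: (boolP (x * sgen n i \in D n i)) => D1.
- have D2 : x * sgen n i.+1 \notin D n i by rewrite -ex.
  rewrite (gamma1 _ _ D1 D2) gamma1 ?mulgA //.
    by rewrite -mulgA Dt.
  by rewrite -mulgA Dt ?groupM.
- have D2 : x * sgen n i.+1 \in D n i by move: D1; rewrite ex negbK.
  rewrite (gamma2 _ _ D1 D2) gamma2 ?mulgA //.
    by rewrite -mulgA Dt.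
  by rewrite -mulgA Dt ?groupM.
Qed.
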